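(* For every integer $n\ge 2$ and every real $x$, $$W^{(1)}_{n}(x)=(-2)^{n-1}\,n\,(n-2)!\,\sin^{n}(x)\,W^{(1)}_{n-1}(x).$$
   Context: For smooth functions $f_1,\dots,f_n$ of a real variable $x$, $\mathrm{Wr}\{f_1,\dots,f_n\}$ denotes the determinant of the $n\times n$ matrix with $(i,j)$ entry $f_j^{(i-1)}(x)$. Define $W^{(1)}_1(x):=\sin(2x)$ and, for $n\ge2$, $W^{(1)}_n(x):=\mathrm{Wr}\{\sin(x),\sin(2x),\dots,\sin((n-1)x),\sin((n+1)x)\}$. *)

(* Defs.v *)
From mathcomp Require Import all_boot all_order all_algebra.
From mathcomp Require Import all_classical all_reals all_analysis.
Set Implicit Arguments. Unset Strict Implicit. Unset Printing Implicit Defensive.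
Import Order.TTheory GRing.Theory Num.Theory.
Local Open Scope ring_scope.

Definition Wr {R : realType} (n : nat) (f : 'I_n -> R -> R) (x : R) : R :=
  \det (\matrix_(i < n, j < n) derive1n i (f j) x).

(* Frequencies 1, 2, ..., n-1, n+1  (0-based index j : 'I_n). *)
Definition freq1 (n : nat) (j : nat) : nat := if (j.+1 < n)%N then j.+1 else n.+1.

Definition W1 {R : realType} (n : nat) (x : R) : R :=
  if n is 1 then sin (2 * x)
  else Wr (fun (j : 'I_n) (t : R) => sin ((freq1 n j)%:R * t)) x.

(* Main.v *)
Require Import Defs.
From mathcomp Require Import all_boot all_order all_algebra.
From mathcomp Require Import all_classical all_reals all_analysis.
From mathcomp Require Import ring zify.
Import Order.TTheory GRing.Theory Num.Theory.
Local Open Scope ring_scope.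

Definition WrA {A : comPzRingType} (D : A -> A) {n : nat} (f : 'I_n -> A) : A :=
  \det (\matrix_(i < n, j < n) iter i D (f j)).

Definition isDer {A : comPzRingType} (D : A -> A) :=
  (forall a b, D (a + b) = D a + D b) /\ (forall a b, D (a * b) = D a * b + a * D b).

Lemma Der0 {A : comPzRingType} {D : A -> A} : isDer D -> D 0 = 0.
Proof.
move=> [hD _]; have h := hD 0 0; rewrite addr0 in h.
have: D 0 + D 0 - D 0 = D 0 - D 0 by rewrite -h.
by rewrite addrK subrr.
Qed.

Lemma Der1 {A : comPzRingType} {D : A -> A} : isDer D -> D 1 = 0.
Proof.
move=> [hD hM]; have h := hM 1 1; rewrite !mulr1 mul1r in h.
have: D 1 + D 1 - D 1 = D 1 - D 1 by rewrite -h.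
by rewrite addrK subrr.
Qed.

Lemma DerN {A : comPzRingType} {D : A -> A} : isDer D -> forall a, D (- a) = - D a.
Proof.
move=> hD a; have h := hD.1 a (- a); rewrite subrr (Der0 hD) in h.
by apply/eqP; rewrite -addr_eq0 addrC -h.
Qed.

Lemma Der_sum {A : comPzRingType} {D : A -> A} (I : Type) (r : seq I) (F : I -> A) :
  isDer D -> D (\sum_(i <- r) F i) = \sum_(i <- r) D (F i).
Proof.
move=> hD; elim: r => [|a r IH]; first by rewrite !big_nil (Der0 hD).
by rewrite !big_cons hD.1 IH.
Qed.

Lemma iterDer_sum {A : comPzRingType} {D : A -> A} (I : Type) (r : seq I) (F : I -> A) k :
  isDer D -> iter k D (\sum_(i <- r) F i) = \sum_(i <- r) iter k D (F i).
Proof.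
move=> hD; elim: k => [//|k IH]; by rewrite iterS IH (Der_sum _ _ _ hD).
Qed.

Lemma iterDer_const {A : comPzRingType} {D : A -> A} c a k :
  isDer D -> D c = 0 -> iter k D (c * a) = c * iter k D a.
Proof.
move=> hD hc; elim: k => [//|k IH]; by rewrite !iterS IH hD.2 hc mul0r add0r.
Qed.

Fixpoint lam {A : comPzRingType} (D : A -> A) (g : A) (i k : nat) : A :=
  match i with
  | 0 => if k == 0%N then g else 0
  | i'.+1 => D (lam D g i' k) + (if k is k'.+1 then lam D g i' k' else 0)
  end.

Lemma lam_gt {A : comPzRingType} {D : A -> A} g i k :
  isDer D -> (i < k)%N -> lam D g i k = 0.
Proof.
move=> hD; elim: i k => [|i IH] [|k] //= hik.
  by rewrite (IH k.+1) ?(Der0 hD) ?add0r ?(IH k) // ltnW.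
Qed.

Lemma lam_diag {A : comPzRingType} {D : A -> A} g i :
  isDer D -> lam D g i i = g.
Proof.
move=> hD; elim: i => [//|i IH] /=; by rewrite lam_gt // (Der0 hD) add0r.
Qed.

Lemma iterDer_mul {A : comPzRingType} {D : A -> A} g f i N :
  isDer D -> (i < N)%N ->
  iter i D (g * f) = \sum_(k < N) lam D g i k * iter k D f.
Proof.
move=> hD; elim: i N => [|i IH] [|N] //= hiN.
  rewrite big_ord_recl /= big1 ?addr0 // => k _; by rewrite mul0r.
rewrite (IH N.+1) ?(ltnW hiN) // (Der_sum _ _ _ hD).
rewrite (eq_bigr _ (fun k _ => hD.2 _ _)).
rewrite big_split /=.
rewrite [X in _ + X]big_ord_recr /= (@lam_gt _ _ g i N) // mul0r addr0.
rewrite [X in _ = X](eq_bigr (fun k : 'I_N.+1 => D (lam D g i k) * iter k D f +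
   (if (k : nat) is k'.+1 then lam D g i k' else 0) * iter k D f)); last first.
  by move=> k _; rewrite mulrDl.
rewrite big_split /=; congr (_ + _).
rewrite big_ord_recl /= mul0r add0r; apply: eq_bigr => k _.
by [].
Qed.

Lemma WrA_mul {A : comPzRingType} {D : A -> A} n g (f : 'I_n -> A) :
  isDer D -> WrA D (fun j => g * f j) = g ^+ n * WrA D f.
Proof.
move=> hD; rewrite /WrA.
have -> : (\matrix_(i < n, j < n) iter i D (g * f j)) =
   (\matrix_(i < n, k < n) lam D g i k) *m (\matrix_(i < n, j < n) iter i D (f j)).
  apply/matrixP => i j; rewrite !mxE (iterDer_mul g (f j) i n hD (ltn_ord i)).
  by apply: eq_bigr => k _; rewrite !mxE.
rewrite det_mulmx det_trig; last first.
  apply/forallP => i; apply/forallP => j; apply/implyP => hij.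
  by rewrite mxE lam_gt.
congr (_ * _); rewrite (eq_bigr (fun _ => g)) ?prodr_const ?card_ord //.
by move=> i _; rewrite mxE lam_diag.
Qed.

Lemma WrA_lin {A : comPzRingType} {D : A -> A} n (T : 'M[A]_n) (f : 'I_n -> A) :
  isDer D -> (forall l j, D (T l j) = 0) ->
  WrA D (fun j => \sum_l T l j * f l) = WrA D f * \det T.
Proof.
move=> hD hT; rewrite /WrA -det_mulmx; congr (\det _).
apply/matrixP => i j; rewrite !mxE (iterDer_sum _ _ _ _ hD).
by apply: eq_bigr => l _; rewrite !mxE iterDer_const // mulrC.
Qed.

Lemma WrA_scale {A : comPzRingType} {D : A -> A} n (c : 'I_n -> A) (f : 'I_n -> A) :
  isDer D -> (forall j, D (c j) = 0) ->
  WrA D (fun j => c j * f j) = (\prod_j c j) * WrA D f.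
Proof.
move=> hD hc.
have -> : (fun j => c j * f j) = (fun j => \sum_l (diag_mx (\row_k c k)) l j * f l).
  apply/funext => j; rewrite (bigD1 j) //= big1 ?addr0; first by rewrite !mxE eqxx mulr1n.
  move=> l hl; rewrite !mxE (negbTE hl) mulr0n mul0r //.
rewrite WrA_lin //; last first.
  by move=> l j; rewrite !mxE; case: (l == j); rewrite ?mulr1n ?mulr0n ?(Der0 hD).
rewrite det_diag mulrC; congr (_ * _); apply: eq_bigr => i _; by rewrite mxE.
Qed.

Lemma WrA_one {A : comPzRingType} {D : A -> A} n (f : 'I_n.+1 -> A) :
  isDer D -> f ord0 = 1 ->
  WrA D f = WrA D (fun j : 'I_n => D (f (lift ord0 j))).
Proof.
move=> hD hf; rewrite /WrA (expand_det_col _ ord0) big_ord_recl big1.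
  rewrite addr0 !mxE hf /= mul1r /cofactor /= expr0 mul1r; congr (\det _).
  by apply/matrixP => i j; rewrite !mxE /= add0n -iterS iterSr.
move=> i _; rewrite !mxE hf lift0 iterSr (Der1 hD).
have -> : forall k, iter k D 0 = 0 by elim=> //= k ->; rewrite (Der0 hD).
by rewrite mul0r.
Qed.


Definition Sp {R : realType} : {poly {poly R}} := ('X)%:P.
Definition dS {R : realType} (P : {poly {poly R}}) : {poly {poly R}} := map_poly (@deriv _) P.
Definition Dp {R : realType} (P : {poly {poly R}}) : {poly {poly R}} :=
  'X * dS P - Sp * P^`().

Lemma dSD {R : realType} (P Q : {poly {poly R}}) : dS (P + Q) = dS P + dS Q.
Proof. by apply/polyP => k; rewrite /dS coef_map !coefD !coef_map raddfD. Qed.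

Lemma dSM {R : realType} (P Q : {poly {poly R}}) : dS (P * Q) = dS P * Q + P * dS Q.
Proof.
apply/polyP => k; rewrite /dS coefD !coefM coef_map coefM raddf_sum -big_split /=.
by apply: eq_bigr => j _; rewrite derivM !coef_map.
Qed.

Lemma isDer_Dp {R : realType} : isDer (@Dp R).
Proof.
split=> a b; rewrite /Dp ?dSD ?dSM ?derivD ?derivM; ring.
Qed.

Definition evf {R : realType} (x : R) (P : {poly {poly R}}) : R :=
  (map_poly (horner_eval (sin x)) P).[cos x].

Lemma evfE {R : realType} (x : R) P :
  evf x P = (horner_eval (cos x) \o map_poly (horner_eval (sin x))) P.
Proof. by []. Qed.

Lemma evfD {R : realType} (x : R) P Q : evf x (P + Q) = evf x P + evf x Q.
Proof. by rewrite !evfE rmorphD. Qed.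
Lemma evfM {R : realType} (x : R) P Q : evf x (P * Q) = evf x P * evf x Q.
Proof. by rewrite !evfE rmorphM. Qed.
Lemma evfN {R : realType} (x : R) P : evf x (- P) = - evf x P.
Proof. by rewrite !evfE rmorphN. Qed.
Lemma evf0 {R : realType} (x : R) : evf x 0 = 0.
Proof. by rewrite !evfE rmorph0. Qed.
Lemma evfX {R : realType} (x : R) P k : evf x (P ^+ k) = evf x P ^+ k.
Proof. by rewrite !evfE rmorphXn. Qed.
Lemma evf_X {R : realType} (x : R) : evf x 'X = cos x.
Proof. by rewrite /evf map_polyX hornerX. Qed.
Lemma evf_C {R : realType} (x : R) (c : {poly R}) : evf x c%:P = c.[sin x].
Proof. by rewrite /evf map_polyC hornerC. Qed.
Lemma evf_Sp {R : realType} (x : R) : evf x Sp = sin x.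
Proof. by rewrite /Sp evf_C hornerX. Qed.
Lemma evf_det {R : realType} (x : R) n (M : 'M[{poly {poly R}}]_n) :
  \det (map_mx (evf x) M) = evf x (\det M).
Proof. by rewrite evfE -det_map_mx. Qed.

Lemma deriv_inner {R : realType} (q : {poly R}) (t : R) :
  is_derive t 1 (fun u => q.[sin u]) (cos t * (q^`()).[sin t]).
Proof.
elim/poly_ind: q => [|p c IH].
  have -> : (fun u : R => 0.[sin u]) = cst 0 by apply/funext => u; rewrite horner0.
  by rewrite deriv0 horner0 mulr0; apply: is_derive_cst.
have -> : (fun u : R => (p * 'X + c%:P).[sin u]) = (fun u => p.[sin u]) * sin + cst c.
  by apply/funext => u; rewrite hornerMXaddC.
have H := is_deriveD (is_deriveM IH (is_derive_sin t)) (is_derive_cst c t 1).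
rewrite derivMXaddC hornerD hornerM hornerX.
have -> : cos t * (p.[sin t] + (p^`()).[sin t] * sin t) =
   p.[sin t] *: cos t + sin t *: (cos t * (p^`()).[sin t]) + 0.
  by rewrite addr0 /GRing.scale /=; ring.
exact: H.
Qed.


Lemma Dp_X {R : realType} : Dp ('X : {poly {poly R}}) = - Sp.
Proof.
rewrite /Dp derivX mulr1.
have -> : dS ('X : {poly {poly R}}) = 0.
  apply/polyP => k; rewrite /dS coef_map coefX coef0.
  case: (_ == _); [exact: (derivC (1 : R)) | exact: (derivC (0 : R))].
by rewrite mulr0 sub0r.
Qed.

Lemma Dp_C {R : realType} (c : {poly R}) : Dp c%:P = 'X * (c^`())%:P.
Proof. by rewrite /Dp /dS map_polyC derivC mulr0 subr0. Qed.

Lemma deriv_ev {R : realType} (P : {poly {poly R}}) (t : R) :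
  is_derive t 1 (fun u => evf u P) (evf t (Dp P)).
Proof.
elim/poly_ind: P => [|P c IH].
  have -> : (fun u : R => evf u 0) = cst 0 by apply/funext => u; rewrite evf0.
  by rewrite (Der0 isDer_Dp) evf0; apply: is_derive_cst.
have -> : (fun u : R => evf u (P * 'X + c%:P)) = (fun u => evf u P) * cos + (fun u => c.[sin u]).
  by apply/funext => u; rewrite evfD evfM evf_X evf_C.
have H := is_deriveD (is_deriveM IH (is_derive_cos t)) (deriv_inner c t).
rewrite isDer_Dp.1 isDer_Dp.2 Dp_X Dp_C !evfD !evfM evfN evf_X evf_Sp evf_C.
move: H; rewrite /GRing.scale /=.
have -> : evf t P * - sin t + cos t * evf t (Dp P) = evf t (Dp P) * cos t + evf t P * - sin t by ring.
by [].
Qed.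


Lemma derive1n_evf {R : realType} i (P : {poly {poly R}}) :
  derive1n i (fun u => evf u P) = fun u => evf u (iter i Dp P).
Proof.
elim: i => [//|i IH]; rewrite /derive1n iterS -/(derive1n i _) IH.
apply/funext => u; rewrite derive1E; apply: derive_val; exact: deriv_ev.
Qed.

Lemma Wr_evf {R : realType} n (g : 'I_n -> {poly {poly R}}) (x : R) :
  Wr (fun j t => evf t (g j)) x = evf x (WrA Dp g).
Proof.
rewrite /Wr /WrA -evf_det; congr (\det _); apply/matrixP => i j.
by rewrite !mxE derive1n_evf.
Qed.

Fixpoint V {R : realType} (m : nat) : {poly R} :=
  match m with
  | 0 => 0
  | m1.+1 => match m1 with 0 => 1 | m2.+1 => ('X * V m1) *+ 2 - V m2 end
  end.

Arguments V {R} m : simpl never.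

Lemma V_SS {R : realType} m : @V R m.+2 = ('X * V m.+1) *+ 2 - V m.
Proof. by []. Qed.

Lemma sinV {R : realType} m (x : R) : sin (m%:R * x) = sin x * (V m).[cos x].
Proof.
suff: sin (m%:R * x) = sin x * (V m).[cos x] /\
      sin (m.+1%:R * x) = sin x * (V m.+1).[cos x] by case.
elim: m => [|m [IH1 IH2]].
  by rewrite /= mul0r sin0 horner0 mulr0 mul1r hornerC mulr1.
split=> //.
have -> : m.+2%:R * x = m.+1%:R * x + x by rewrite -addn1 natrD mulrDl mul1r.
have Hm : m%:R * x = m.+1%:R * x - x by rewrite -addn1 natrD mulrDl mul1r addrK.
rewrite V_SS !hornerE.
transitivity (cos x * (sin x * (V m.+1).[cos x]) * 2 - sin x * (V m).[cos x]); last by ring.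
rewrite -IH2 -IH1 Hm sinD sinB.
ring.
Qed.

Lemma V_coef {R : realType} m d :
  (@V R m.+2)`_d = (if d is d'.+1 then (V m.+1)`_d' else 0) *+ 2 - (V m)`_d.
Proof. by rewrite V_SS coefB coefMn coefXM; case: d. Qed.

Lemma V_coef_big {R : realType} m d : (m <= d)%N -> (@V R m)`_d = 0.
Proof.
suff: forall d, ((m <= d)%N -> (@V R m)`_d = 0) /\ ((m.+1 <= d)%N -> (@V R m.+1)`_d = 0).
  by move=> /(_ d) [].
elim: m => [|m IH] {}d.
  split; first by rewrite coef0.
  by case: d => // d _; rewrite /= coefC.
split; first by case: (IH d).
move=> hd; rewrite V_coef; case: d hd => [//|d] hd.
by rewrite (proj2 (IH d)) // (proj1 (IH d.+1)) ?mul0rn ?subr0 //; lia.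
Qed.

Lemma V_coef_par {R : realType} m d : ~~ odd (m + d) -> (@V R m)`_d = 0.
Proof.
suff: forall d, (~~ odd (m + d) -> (@V R m)`_d = 0) /\ (~~ odd (m.+1 + d) -> (@V R m.+1)`_d = 0).
  by move=> /(_ d) [].
elim: m => [|m IH] {}d.
  split; first by rewrite coef0.
  by case: d => // d _; rewrite /= coefC.
split; first by case: (IH d).
move=> hd; rewrite V_coef; case: d hd => [|d] hd.
  by rewrite mul0rn sub0r (proj1 (IH 0%N)) ?oppr0 //; move: hd; rewrite !addn0 /= negbK.
rewrite (proj2 (IH d)) ?(proj1 (IH d.+1)) ?mul0rn ?subr0 //.
  by move: hd; rewrite !addSn addnS /= !negbK.
by move: hd; rewrite !addSn addnS /= negbK.
Qed.

Lemma V_lead {R : realType} m : (@V R m.+1)`_m = 2 ^+ m.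
Proof.
elim: m => [|m IH]; first by rewrite /= coefC.
rewrite V_coef IH (@V_coef_big R m m.+1 (leqnSn m)) subr0 exprS mulrC.
ring.
Qed.


Definition aa (m l : nat) : nat := if (l < m)%N then l else m.+1.
Definition Vc {R : realType} (k : nat) : {poly {poly R}} := map_poly polyC (V k).
Definition cc {R : realType} (c : R) : {poly {poly R}} := c%:P%:P.

Lemma evf_Vc {R : realType} (t : R) k : evf t (Vc k) = (V k).[cos t].
Proof.
rewrite /evf /Vc; congr (_.[_]); apply/polyP => i.
by rewrite !coef_map /= horner_evalE hornerC.
Qed.

Lemma evf_cc {R : realType} (t : R) c : evf t (cc c) = c.
Proof. by rewrite /cc evf_C hornerC. Qed.

Lemma Dp_cc {R : realType} (c : R) : Dp (cc c) = 0.
Proof. by rewrite /cc Dp_C derivC mulr0. Qed.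

Lemma aa_mono m i j : (i < j)%N -> (j <= m)%N -> (aa m i < aa m j)%N.
Proof. rewrite /aa; case: ifP => h1; case: ifP => h2; lia. Qed.

Lemma Vc_expand {R : realType} k N : (k <= N)%N ->
  @Vc R k = \sum_(d < N) cc ((V k)`_d) * 'X^d.
Proof.
move=> hk; have -> : @Vc R k = \poly_(d < N) ((V k)`_d)%:P.
  apply/polyP => i; rewrite /Vc !coef_poly; case: ifP => h1; case: ifP => h2 //.
    by rewrite V_coef_big ?polyC0 //; move: h2; rewrite ltnNge; case: leqP => //; lia.
  by rewrite nth_default ?polyC0 // leqNgt h1.
by rewrite poly_def; apply: eq_bigr => d _; rewrite mul_polyC.
Qed.

Lemma coltrans {R : realType} m (j : 'I_m.+1) :
  Sp * Vc (aa m j).+1 =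
  \sum_(l < m.+1) cc ((@V R (aa m j).+1)`_(aa m l)) * (Sp * 'X^(aa m l)).
Proof.
have hj : (aa m j <= m.+1)%N by rewrite /aa; case: ifP => h; lia.
rewrite (@Vc_expand R _ m.+2) // !big_ord_recr /=.
have -> : (@V R (aa m j).+1)`_m = 0.
  rewrite /aa; case: ifP => h.
    by rewrite V_coef_big.
  by apply: V_coef_par; rewrite !addSn /= negbK addnn odd_double.
have -> : @cc R 0 = 0 by rewrite /cc !polyC0.
rewrite mul0r addr0 mulrDr big_distrr /=.
have -> : aa m m = m.+1 by rewrite /aa ltnn.
congr (_ + _); last by rewrite mulrCA.
apply: eq_bigr => l _.
have -> : aa m l = l by rewrite /aa ltn_ord.
by rewrite mulrCA.
Qed.

Definition detR {R : realType} (m : nat) : R := \prod_(l < m.+1) 2 ^+ aa m l.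
Definition Q {R : realType} (m : nat) : {poly {poly R}} :=
  WrA Dp (fun l : 'I_m.+1 => 'X^(aa m l)).

Lemma cc_prod {R : realType} (m : nat) (F : 'I_m -> R) :
  cc (\prod_l F l) = \prod_l cc (F l).
Proof. by rewrite /cc !rmorph_prod. Qed.

Lemma detT {R : realType} m :
  \det (\matrix_(l < m.+1, j < m.+1) cc ((@V R (aa m j).+1)`_(aa m l))) = cc (detR m).
Proof.
rewrite -det_tr det_trig.
  rewrite /detR cc_prod; apply: eq_bigr => l _; by rewrite !mxE V_lead.
apply/forallP => i; apply/forallP => j; apply/implyP => hij.
rewrite !mxE V_coef_big ?/cc ?polyC0 //.
by apply: aa_mono => //; rewrite -ltnS.
Qed.

Lemma W1_Wr {R : realType} m (x : R) :
  W1 m.+1 x = Wr (fun (j : 'I_m.+1) (t : R) => sin ((freq1 m.+1 j)%:R * t)) x.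
Proof.
case: m => [|m] //.
rewrite /W1 /Wr det_mx11 mxE /=.
by [].
Qed.

Lemma W1_rep {R : realType} m (x : R) :
  W1 m.+1 x = evf x (Sp ^+ m.+1 * Q m * cc (detR m)).
Proof.
rewrite W1_Wr.
have -> : (fun (j : 'I_m.+1) (t : R) => sin ((freq1 m.+1 j)%:R * t)) =
          (fun j t => evf t (Sp * Vc (aa m j).+1)).
  apply/funext => j; apply/funext => t.
  have -> : freq1 m.+1 j = (aa m j).+1 by rewrite /freq1 /aa ltnS; case: ifP.
  by rewrite sinV evfM evf_Sp evf_Vc.
rewrite Wr_evf.
set T := (\matrix_(l < m.+1, j < m.+1) cc ((@V R (aa m j).+1)`_(aa m l))).
have -> : (fun j : 'I_m.+1 => Sp * Vc (aa m j).+1) =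
          (fun j => \sum_l T l j * (fun l : 'I_m.+1 => Sp * 'X^(aa m l)) l).
  apply/funext => j; rewrite coltrans; apply: eq_bigr => l _; by rewrite mxE.
rewrite WrA_lin; last 2 first.
- exact: isDer_Dp.
- by move=> l j; rewrite mxE Dp_cc.
rewrite /T detT WrA_mul //; exact: isDer_Dp.
Qed.

Lemma Der_exp {A : comPzRingType} {D : A -> A} (a : A) k :
  isDer D -> D (a ^+ k.+1) = a ^+ k * D a * k.+1%:R.
Proof.
move=> hD; elim: k => [|k IH]; first by rewrite expr1 expr0 mul1r mulr1.
rewrite exprS hD.2 IH exprS -[k.+2]addn1 natrD; ring.
Qed.

Lemma Der_nat {A : comPzRingType} {D : A -> A} k :
  isDer D -> D (k%:R) = 0.
Proof.
move=> hD; elim: k => [|k IH]; first by rewrite (Der0 hD).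
by rewrite mulrS hD.1 IH (Der1 hD) addr0.
Qed.

Lemma fact_prod_ord m : (\prod_(j < m) j.+1)%N = m`!.
Proof.
elim: m => [|m IH]; first by rewrite big_ord0.
by rewrite big_ord_recr /= IH factS mulnC.
Qed.

Lemma Q_rec {R : realType} m :
  @Q R m.+1 = (-1) ^+ m.+1 * ((m`! * m.+2)%N)%:R * (Sp ^+ m.+1 * Q m).
Proof.
rewrite /Q (WrA_one _ _ isDer_Dp); last by rewrite /aa /= expr0.
have -> : (fun j : 'I_m.+1 => @Dp R ('X^(aa m.+1 (lift ord0 j)))) =
          (fun j => (- ((aa m j).+1)%:R) * (Sp * 'X^(aa m j))).
  apply/funext => j.
  have -> : aa m.+1 (lift ord0 j) = (aa m j).+1.
    by rewrite lift0 /aa ltnS; case: ifP.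
  rewrite (Der_exp _ _ isDer_Dp) Dp_X; ring.
rewrite WrA_scale; last 2 first.
- exact: isDer_Dp.
- by move=> j; rewrite (DerN isDer_Dp) (Der_nat _ isDer_Dp) oppr0.
rewrite WrA_mul; last exact: isDer_Dp.
congr (_ * _).
rewrite (eq_bigr (fun j : 'I_m.+1 => -1 * ((aa m j).+1)%:R)); last by move=> j _; rewrite mulN1r.
rewrite big_split /= prodr_const card_ord; congr (_ * _).
rewrite -natr_prod.
rewrite big_ord_recr /= -fact_prod_ord.
have -> : aa m m = m.+1 by rewrite /aa ltnn.
congr ((_ * _)%N%:R); apply: eq_bigr => j _.
by rewrite /aa /= ltn_ord.
Qed.

Lemma detR_rec {R : realType} m : @detR R m.+1 = detR m * 2 ^+ m.+1.
Proof.
rewrite /detR !big_ord_recr /=.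
have -> : aa m.+1 m.+1 = m.+2 by rewrite /aa ltnn.
have -> : aa m m = m.+1 by rewrite /aa ltnn.
have -> : aa m.+1 m = m by rewrite /aa ltnSn.
have -> : \prod_(i < m) (2:R) ^+ aa m.+1 (widen_ord (leqnSn m) i) = \prod_(i < m) 2 ^+ aa m i.
  by apply: eq_bigr => i _; rewrite /aa /= ltn_ord ltnS ltnW.
rewrite !exprS; ring.
Qed.

Lemma evf_nat {R : realType} (x : R) k : evf x k%:R = k%:R.
Proof. by rewrite evfE rmorph_nat. Qed.

Lemma evf_N1 {R : realType} (x : R) : evf x (-1) = -1.
Proof. by rewrite evfE rmorphN1. Qed.

Theorem mainTheorem3 (R : realType) (n : nat) (x : R) (hn : (2 <= n)%N) :
  W1 n x = (-2) ^+ (n - 1) * n%:R * ((n - 2)`!)%:R * sin x ^+ n * W1 (n - 1) x.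
Proof.
case: n hn => [|[|m]] // _.
have -> : (m.+2 - 1 = m.+1)%N by lia.
have -> : (m.+2 - 2 = m)%N by lia.
rewrite !W1_rep Q_rec detR_rec.
rewrite !evfM !evfX evf_N1 evf_Sp evf_nat !evf_cc natrM.
have -> : (-2 : R) ^+ m.+1 = (-1) ^+ m.+1 * 2 ^+ m.+1 by rewrite -exprMn mulN1r.
rewrite [sin x ^+ m.+2]exprS.
set a := (-1 : R) ^+ m.+1; set b := (2 : R) ^+ m.+1; set c := (m.+2%:R : R); set d := (m`!%:R : R); set e := sin x ^+ m.+1.
ring.
Qed.
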